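(* Let $\beta_\bullet\in\{\beta,\beta_v\}$, with $\rightsquigarrow_U$ the unbiased iteration of surface reduction and $\rightsquigarrow_{pd}$ its parallel version (as in the context). Then: 1. if $M\rightsquigarrow_{pd}N$ then $M\rightsquigarrow_U^*N$; consequently $M\rightsquigarrow_{pd}^*N$ implies $M\rightsquigarrow_U^*N$; 2. if $M\rightsquigarrow_U^*N$ then there exists $N'$ such that $M\rightsquigarrow_{pd}^*N'$ and $N\rightsquigarrow_U^*N'$.
   Context: Terms $\Lambda_{\mathcal O}$: $M::=x\mid\lambda x.M\mid MM\mid\mathsf{op}(M,\dots,M)$ with $\mathsf{op}$ in a (possibly empty) set $\mathcal O$ of operator symbols with fixed arities; values $V::=x\mid\lambda x.M$. Rules $(\lambda x.M)N\mapsto_\beta M\{N/x\}$, $(\lambda x.M)V\mapsto_{\beta_v}M\{V/x\}$; $\to=\to_{\beta_\bullet}$ is the closure under all contexts. Surface reduction $\to_s$: for $\beta$, closure of $\beta$ under head contexts $H::=[\,]\mid\lambda x.H\mid HM$; for $\beta_v$, closure of $\beta_v$ under weak contexts $W::=[\,]\mid WM\mid MW$. $\rightsquigarrow_U$: if $M\to_sM'$ then $M\rightsquigarrow_UM'$; if $M$ is $\to_s$-normal: $\lambda x.P\rightsquigarrow_U\lambda x.P'$ if $P\rightsquigarrow_UP'$; $PQ\rightsquigarrow_UP'Q$ if $P\rightsquigarrow_UP'$; $PQ\rightsquigarrow_UPQ'$ if $Q\rightsquigarrow_UQ'$; $\mathsf{op}(\dots,P_i,\dots)\rightsquigarrow_U\mathsf{op}(\dots,P_i',\dots)$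 if $P_i\rightsquigarrow_UP_i'$. Parallel reduction $\rightsquigarrow_{pd}$: (1) if $M\to_sM'$ then $M\rightsquigarrow_{pd}M'$; (2) if $M$ is $\to$-normal then $M\rightsquigarrow_{pd}M$; (3) otherwise (M is $\to_s$-normal but not $\to$-normal): $\lambda x.P\rightsquigarrow_{pd}\lambda x.P'$ if $P\rightsquigarrow_{pd}P'$; $P_1P_2\rightsquigarrow_{pd}P_1'P_2'$ if $P_1\rightsquigarrow_{pd}P_1'$ and $P_2\rightsquigarrow_{pd}P_2'$; $\mathsf{op}(P_1,\dots,P_k)\rightsquigarrow_{pd}\mathsf{op}(P_1',\dots,P_k')$ if $P_i\rightsquigarrow_{pd}P_i'$ for all $1\le i\le k$. *)

(* Defs.v *)
From Stdlib Require Import List Arith Relations.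
Import ListNotations.
Set Implicit Arguments.

Section Lambda.
Variable O : Type.

Inductive term : Type :=
| Var : nat -> term
| Lam : term -> term
| App : term -> term -> term
| Op  : O -> list term -> term.

Inductive wf (ar : O -> nat) : term -> Prop :=
| wf_var n : wf ar (Var n)
| wf_lam t : wf ar t -> wf ar (Lam t)
| wf_app t u : wf ar t -> wf ar u -> wf ar (App t u)
| wf_op o ts : length ts = ar o -> Forall (wf ar) ts -> wf ar (Op o ts).

Fixpoint lift (c : nat) (t : term) : term :=
  match t with
  | Var n => if n <? c then Var n else Var (S n)
  | Lam t => Lam (lift (S c) t)
  | App a b => App (lift c a) (lift c b)
  | Op o ts => Op o (map (lift c) ts)
  end.

Fixpoint subst (k : nat) (N : term) (t : term) : term :=
  match t with
  | Var n => if n =? k then N else if n <? k then Var n else Var (pred n)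
  | Lam t => Lam (subst (S k) (lift 0 N) t)
  | App a b => App (subst k N a) (subst k N b)
  | Op o ts => Op o (map (subst k N) ts)
  end.

Definition is_value (t : term) : Prop :=
  match t with Var _ | Lam _ => True | _ => False end.

(* beta_bullet : call-by-name beta or call-by-value beta_v *)
Inductive calculus := CbN | CbV.

Inductive root (s : calculus) : term -> term -> Prop :=
| root_beta M N : s = CbN -> root s (App (Lam M) N) (subst 0 N M)
| root_betav M V : s = CbV -> is_value V -> root s (App (Lam M) V) (subst 0 V M).

Inductive step (s : calculus) : term -> term -> Prop :=
| step_root M N : root s M N -> step s M N
| step_lam M M' : step s M M' -> step s (Lam M) (Lam M')
| step_appl M M' N : step s M M' -> step s (App M N) (App M' N)
| step_appr M N N' : step s N N' -> step s (App M N) (App M N')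
| step_op o l1 M M' l2 : step s M M' -> step s (Op o (l1 ++ M :: l2)) (Op o (l1 ++ M' :: l2)).

(* surface reduction: head contexts for beta, weak contexts for beta_v *)
Inductive sstep (s : calculus) : term -> term -> Prop :=
| sstep_root M N : root s M N -> sstep s M N
| sstep_lam M M' : s = CbN -> sstep s M M' -> sstep s (Lam M) (Lam M')
| sstep_appl M M' N : sstep s M M' -> sstep s (App M N) (App M' N)
| sstep_appr M N N' : s = CbV -> sstep s N N' -> sstep s (App M N) (App M N').

Definition normal (s : calculus) (M : term) : Prop := forall N, ~ step s M N.
Definition snormal (s : calculus) (M : term) : Prop := forall N, ~ sstep s M N.

Inductive ustep (s : calculus) : term -> term -> Prop :=
| u_surf M M' : sstep s M M' -> ustep s M M'
| u_lam P P' : snormal s (Lam P) -> ustep s P P' -> ustep s (Lam P) (Lam P')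
| u_appl P P' Q : snormal s (App P Q) -> ustep s P P' -> ustep s (App P Q) (App P' Q)
| u_appr P Q Q' : snormal s (App P Q) -> ustep s Q Q' -> ustep s (App P Q) (App P Q')
| u_op o l1 P P' l2 : snormal s (Op o (l1 ++ P :: l2)) -> ustep s P P' ->
    ustep s (Op o (l1 ++ P :: l2)) (Op o (l1 ++ P' :: l2)).

Inductive pd (s : calculus) : term -> term -> Prop :=
| pd_surf M M' : sstep s M M' -> pd s M M'
| pd_normal M : normal s M -> pd s M M
| pd_lam P P' : snormal s (Lam P) -> ~ normal s (Lam P) -> pd s P P' ->
    pd s (Lam P) (Lam P')
| pd_app P1 P1' P2 P2' : snormal s (App P1 P2) -> ~ normal s (App P1 P2) ->
    pd s P1 P1' -> pd s P2 P2' -> pd s (App P1 P2) (App P1' P2')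
| pd_op o ps ps' : snormal s (Op o ps) -> ~ normal s (Op o ps) ->
    Forall2 (pd s) ps ps' -> pd s (Op o ps) (Op o ps').

End Lambda.

Arguments Var {O}.

(* Main.v *)
Require Import Defs.
From Stdlib Require Import List Relations.
From Stdlib Require Import Classical Lia Arith.
Import ListNotations.
Set Implicit Arguments. Unset Strict Implicit.

Section S.
Context {O : Type}.
Notation T := (term O).

Section Ind.
Variable P : T -> Prop.
Hypothesis HV : forall n, P (Var n).
Hypothesis HL : forall t, P t -> P (Lam t).
Hypothesis HA : forall t u, P t -> P u -> P (App t u).
Hypothesis HO : forall o l, Forall P l -> P (Op o l).
Fixpoint term_ind' (t : T) : P t :=
  match t with
  | Var n => HV n
  | Lam t => HL (term_ind' t)
  | App a b => HA (term_ind' a) (term_ind' b)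
  | Op o l => HO o ((fix F (l : list T) : Forall P l :=
       match l with nil => Forall_nil _ | cons x l' => Forall_cons _ (term_ind' x) (F l') end) l)
  end.
End Ind.

Definition kind (t : T) := match t with Var _ => 0 | Lam _ => 1 | App _ _ => 2 | Op _ _ => 3 end.

Lemma sstep_step s (M N : T) : sstep s M N -> step s M N.
Proof.
  induction 1.
  - apply step_root; auto.
  - apply step_lam; auto.
  - apply step_appl; auto.
  - apply step_appr; auto.
Qed.

Lemma snormal_var s n : snormal s (Var n : T).
Proof. intros N H; inversion H; subst; match goal with H : root _ _ _ |- _ => inversion H end. Qed.

Lemma snormal_op s o (l : list T) : snormal s (Op o l).
Proof. intros N H; inversion H; subst; match goal with H : root _ _ _ |- _ => inversion H end. Qed.

Lemma snormal_lam_inv s (P : T) : snormal s (Lam P) -> s = CbN -> snormal s P.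
Proof. intros H E N HN. apply (H (Lam N)). apply sstep_lam; auto. Qed.

Lemma snormal_lam_intro s (P : T) : (s = CbN -> snormal s P) -> snormal s (Lam P).
Proof. intros H N HN. inversion HN; subst.
  - match goal with H : root _ _ _ |- _ => inversion H end.
  - eapply H; eauto.
Qed.

Lemma snormal_app_inv s (P Q : T) : snormal s (App P Q) ->
  snormal s P /\ (s = CbV -> snormal s Q) /\ (forall N, ~ root s (App P Q) N).
Proof.
  intros H; split; [|split].
  - intros N HN; apply (H (App N Q)); apply sstep_appl; auto.
  - intros E N HN; apply (H (App P N)); apply sstep_appr; auto.
  - intros N HN; apply (H N); apply sstep_root; auto.
Qed.

Lemma snormal_app_intro s (P Q : T) : snormal s P -> (s = CbV -> snormal s Q) ->
  (forall N, ~ root s (App P Q) N) -> snormal s (App P Q).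
Proof.
  intros H1 H2 H3 N HN; inversion HN; subst.
  - eapply H3; eauto.
  - eapply H1; eauto.
  - eapply H2; eauto.
Qed.

Lemma root_kind s (P Q P' Q' N : T) : root s (App P' Q') N -> kind P' = kind P ->
  (s = CbV -> kind Q' = kind Q) -> exists N0, root s (App P Q) N0.
Proof.
  intros H HP HQ. inversion H; subst.
  - destruct P; simpl in HP; try discriminate. eexists; apply root_beta; auto.
  - destruct P; simpl in HP; try discriminate. specialize (HQ eq_refl).
    match goal with Hv : is_value ?V |- _ => destruct V, Q; simpl in *; try discriminate; try contradiction end;
    eexists; apply root_betav; simpl; auto.
Qed.

Lemma ustep_snormal s (M M' : T) : ustep s M M' -> snormal s M -> snormal s M' /\ kind M' = kind M.
Proof.
  induction 1; intros Hs.
  - exfalso; eapply Hs; eauto.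
  - split; auto. apply snormal_lam_intro. intro E. apply IHustep. apply snormal_lam_inv; auto.
  - destruct (snormal_app_inv Hs) as (h1 & h2 & h3). destruct (IHustep h1) as [h4 h5].
    split; auto. apply snormal_app_intro; auto.
    intros N HN. destruct (root_kind HN h5 (fun _ => eq_refl)) as [N0 HN0]. eapply h3; eauto.
  - destruct (snormal_app_inv Hs) as (h1 & h2 & h3).
    split; auto. apply snormal_app_intro; auto.
    + intro E. apply IHustep; auto.
    + intros N HN. destruct (root_kind HN (P := P) eq_refl (fun E => proj2 (IHustep (h2 E)))) as [N0 HN0].
      eapply h3; eauto.
  - split; auto. apply snormal_op.
Qed.

Lemma pd_snormal s (M M' : T) : pd s M M' -> snormal s M -> snormal s M' /\ kind M' = kind M.
Proof.
  induction 1; intros Hs.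
  - exfalso; eapply Hs; eauto.
  - auto.
  - split; auto. apply snormal_lam_intro. intro E. apply IHpd. apply snormal_lam_inv; auto.
  - destruct (snormal_app_inv Hs) as (h1 & h2 & h3). destruct (IHpd1 h1) as [h4 h5].
    split; auto. apply snormal_app_intro; auto.
    + intro E. apply IHpd2; auto.
    + intros N HN. destruct (root_kind HN h5 (fun E => proj2 (IHpd2 (h2 E)))) as [N0 HN0].
      eapply h3; eauto.
  - split; auto. apply snormal_op.
Qed.

Lemma ustep_rt_snormal s (M M' : T) : clos_refl_trans _ (ustep s) M M' -> snormal s M -> snormal s M'.
Proof. induction 1; auto. intro h; apply (ustep_snormal H h). Qed.

Lemma lift_ctx s (f : T -> T) :
  (forall x x', snormal s (f x) -> ustep s x x' -> ustep s (f x) (f x')) ->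
  forall x y, clos_refl_trans _ (ustep s) x y -> snormal s (f x) ->
  clos_refl_trans _ (ustep s) (f x) (f y).
Proof.
  intros Hf x y H. apply clos_rt_rt1n in H. induction H; intros Hs.
  - apply rt_refl.
  - eapply rt_trans; [apply rt_step; apply Hf; eauto|].
    apply IHclos_refl_trans_1n. apply (ustep_snormal (Hf _ _ Hs H) Hs).
Qed.

Lemma lam_lift s (P P' : T) : snormal s (Lam P) -> clos_refl_trans _ (ustep s) P P' ->
  clos_refl_trans _ (ustep s) (Lam P) (Lam P').
Proof. intros h1 h2. apply (lift_ctx (f := fun x => Lam x)); auto. intros; apply u_lam; auto. Qed.

Lemma app_lift s (P P' Q Q' : T) : snormal s (App P Q) -> clos_refl_trans _ (ustep s) P P' ->
  clos_refl_trans _ (ustep s) Q Q' ->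
  clos_refl_trans _ (ustep s) (App P Q) (App P' Q').
Proof.
  intros h1 h2 h3.
  assert (H : clos_refl_trans _ (ustep s) (App P Q) (App P' Q)).
  { apply (lift_ctx (f := fun x => App x Q)); auto. intros; apply u_appl; auto. }
  eapply rt_trans; [exact H|].
  apply (lift_ctx (f := fun x => App P' x)); auto.
  - intros; apply u_appr; auto.
  - apply (ustep_rt_snormal H h1).
Qed.

Lemma op_lift s o (ps ps' : list T) : Forall2 (clos_refl_trans _ (ustep s)) ps ps' ->
  forall l1, clos_refl_trans _ (ustep s) (Op o (l1 ++ ps)) (Op o (l1 ++ ps')).
Proof.
  induction 1; intros l1.
  - apply rt_refl.
  - eapply rt_trans.
    + apply (lift_ctx (f := fun z => Op o (l1 ++ z :: l))); eauto.
      * intros; apply u_op; auto.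
      * apply snormal_op.
    + specialize (IHForall2 (l1 ++ [y])). rewrite <- !app_assoc in IHForall2. exact IHForall2.
Qed.

Lemma part1 s (M N : T) : pd s M N -> clos_refl_trans _ (ustep s) M N.
Proof.
  revert N. induction M using term_ind'; intros N Hp; inversion Hp; subst;
    try (apply rt_step, u_surf; assumption); try apply rt_refl.
  - apply lam_lift; auto.
  - apply app_lift; auto.
  - match goal with |- clos_refl_trans _ _ (Op ?o ?a) (Op _ ?b) => change (Op o a) with (Op o ([] ++ a)); change (Op o b) with (Op o ([] ++ b)) end.
    apply op_lift.
    match goal with H2 : Forall2 _ _ _ |- _ => revert H2 end. 
    match goal with H0 : Forall _ _ |- _ => revert H0 end. clear.
    intros H0 H2. induction H2; inversion H0; subst; constructor; auto.
Qed.


Fixpoint itern {A} (R : A -> A -> Prop) (n : nat) (x y : A) : Prop :=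
  match n with 0 => x = y | S n => exists z, R x z /\ itern R n z y end.

Lemma itern_rt {A} (R : A -> A -> Prop) n x y : itern R n x y -> clos_refl_trans _ R x y.
Proof.
  revert x; induction n; simpl; intros x H.
  - subst; apply rt_refl.
  - destruct H as (z & h1 & h2). eapply rt_trans; [apply rt_step; eauto | eauto].
Qed.

Lemma rt_itern {A} (R : A -> A -> Prop) x y : clos_refl_trans _ R x y -> exists n, itern R n x y.
Proof.
  intros H; apply clos_rt_rt1n in H; induction H.
  - exists 0; reflexivity.
  - destruct IHclos_refl_trans_1n as [n Hn]. exists (S n); simpl; eauto.
Qed.

Lemma itern_add {A} (R : A -> A -> Prop) n m x y z : itern R n x y -> itern R m y z -> itern R (n + m) x z.
Proof.
  revert x; induction n; simpl; intros x H1 H2.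
  - subst; auto.
  - destruct H1 as (w & h1 & h2). eauto.
Qed.

Lemma normal_lam s (P : T) : normal s (Lam P) -> normal s P.
Proof. intros H N HN; apply (H (Lam N)); apply step_lam; auto. Qed.

Lemma normal_app s (P Q : T) : normal s (App P Q) -> normal s P /\ normal s Q.
Proof. intros H; split; intros N HN; [apply (H (App N Q)); apply step_appl | apply (H (App P N)); apply step_appr]; auto. Qed.

Lemma normal_op s o (ps : list T) : normal s (Op o ps) -> Forall (normal s) ps.
Proof.
  intros H. apply Forall_forall. intros p Hp N HN.
  destruct (in_split _ _ Hp) as (l1 & l2 & E). subst.
  apply (H (Op o (l1 ++ N :: l2))). apply step_op; auto.
Qed.

Lemma pd_normal_id s (M M' : T) : normal s M -> pd s M M' -> M' = M.
Proof.
  intros Hn H; inversion H; subst; try reflexivity; try contradiction.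
  exfalso; eapply Hn; apply sstep_step; eauto.
Qed.

Lemma pdn_normal_id s n (M M' : T) : normal s M -> itern (pd s) n M M' -> M' = M.
Proof.
  revert M; induction n; simpl; intros M Hn H; auto.
  destruct H as (z & h1 & h2). pose proof (pd_normal_id Hn h1); subst. eauto.
Qed.

Lemma pd_total s (M : T) : exists M', pd s M M'.
Proof.
  induction M using term_ind'.
  - exists (Var n). apply pd_normal. intros N HN; inversion HN; subst.
    match goal with H : root _ _ _ |- _ => inversion H end.
  - destruct (classic (exists N, sstep s (Lam M) N)) as [[N HN]|HN]; [exists N; apply pd_surf; auto|].
    destruct (classic (normal s (Lam M))) as [Hm|Hm]; [eexists; apply pd_normal; auto|].
    destruct IHM as [M' H']. exists (Lam M'). apply pd_lam; auto.
    intros N HN'; apply HN; eauto.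
  - destruct (classic (exists N, sstep s (App M1 M2) N)) as [[N HN]|HN]; [exists N; apply pd_surf; auto|].
    destruct (classic (normal s (App M1 M2))) as [Hm|Hm]; [eexists; apply pd_normal; auto|].
    destruct IHM1 as [M1' H1'], IHM2 as [M2' H2']. exists (App M1' M2'). apply pd_app; auto.
    intros N HN'; apply HN; eauto.
  - destruct (classic (normal s (Op o l))) as [Hm|Hm]; [eexists; apply pd_normal; auto|].
    assert (exists l', Forall2 (pd s) l l') as [l' Hl'].
    { clear Hm. induction H.
      - exists []; constructor.
      - destruct H as [x' Hx], IHForall as [l' Hl']. exists (x' :: l'); constructor; auto. }
    exists (Op o l'). apply pd_op; auto. apply snormal_op.
Qed.

Lemma pd_extend s d (P : T) : exists P', itern (pd s) d P P' /\ clos_refl_trans _ (ustep s) P P'.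
Proof.
  revert P; induction d; intros P.
  - exists P; split; [reflexivity | apply rt_refl].
  - destruct (pd_total s P) as [P1 H1]. destruct (IHd P1) as (P2 & h1 & h2).
    exists P2; split; [simpl; eauto|]. eapply rt_trans; [apply part1; eauto | auto].
Qed.

Lemma pad s k m (P P' : T) : itern (pd s) k P P' -> k <= m ->
  exists P'', itern (pd s) m P P'' /\ clos_refl_trans _ (ustep s) P' P''.
Proof.
  intros H Hk. destruct (pd_extend s (m - k) P') as (P'' & h1 & h2).
  exists P''; split; auto. replace m with (k + (m - k)) by lia. eapply itern_add; eauto.
Qed.

Lemma pad_list s k m (ps ps' : list T) : Forall2 (itern (pd s) k) ps ps' -> k <= m ->
  exists ps'', Forall2 (itern (pd s) m) ps ps'' /\ Forall2 (clos_refl_trans _ (ustep s)) ps' ps''.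
Proof.
  induction 1; intros Hk.
  - exists []; split; constructor.
  - destruct (pad H Hk) as (y' & h1 & h2). destruct (IHForall2 Hk) as (l'' & h3 & h4).
    exists (y' :: l''); split; constructor; auto.
Qed.

Lemma Forall2_rt_trans s (a b c : list T) : Forall2 (clos_refl_trans _ (ustep s)) a b ->
  Forall2 (clos_refl_trans _ (ustep s)) b c -> Forall2 (clos_refl_trans _ (ustep s)) a c.
Proof.
  intros H; revert c; induction H; intros c H2; inversion H2; subst; constructor; eauto.
  eapply rt_trans; eauto.
Qed.

Lemma pad_all s (ps qs : list T) : Forall2 (fun p q => exists k, itern (pd s) k p q) ps qs ->
  exists m ps'', Forall2 (itern (pd s) m) ps ps'' /\ Forall2 (clos_refl_trans _ (ustep s)) qs ps''.
Proof.
  induction 1.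
  - exists 0, []; split; constructor.
  - destruct H as [k Hk]. destruct IHForall2 as (m1 & l1 & h1 & h2).
    destruct (pad Hk (Nat.le_max_l k m1)) as (y' & h3 & h4).
    destruct (pad_list h1 (Nat.le_max_r k m1)) as (l2 & h5 & h6).
    exists (Nat.max k m1), (y' :: l2); split; constructor; auto.
    eapply Forall2_rt_trans; eauto.
Qed.

Lemma lift_pd_lam s (P P' : T) : snormal s (Lam P) -> clos_refl_trans _ (pd s) P P' ->
  clos_refl_trans _ (pd s) (Lam P) (Lam P').
Proof.
  intros Hs H; apply clos_rt_rt1n in H; induction H.
  - apply rt_refl.
  - destruct (classic (normal s (Lam x))) as [Hn|Hn].
    + pose proof (pd_normal_id (normal_lam Hn) H); subst. auto.
    + assert (pd s (Lam x) (Lam y)) by (apply pd_lam; auto).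
      eapply rt_trans; [apply rt_step; eauto|]. apply IHclos_refl_trans_1n.
      exact (proj1 (pd_snormal H1 Hs)).
Qed.

Lemma lift_pd_app s m (P Q P' Q' : T) : snormal s (App P Q) -> itern (pd s) m P P' ->
  itern (pd s) m Q Q' -> clos_refl_trans _ (pd s) (App P Q) (App P' Q').
Proof.
  revert P Q; induction m; simpl; intros P Q Hs h1 h2.
  - subst; apply rt_refl.
  - destruct h1 as (P1 & h1 & h1'), h2 as (Q1 & h2 & h2').
    destruct (classic (normal s (App P Q))) as [Hn|Hn].
    + destruct (normal_app Hn) as [n1 n2].
      pose proof (pd_normal_id n1 h1); pose proof (pd_normal_id n2 h2); subst. auto.
    + assert (pd s (App P Q) (App P1 Q1)) by (apply pd_app; auto).
      eapply rt_trans; [apply rt_step; eauto|]. apply IHm; auto.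
      exact (proj1 (pd_snormal H Hs)).
Qed.

Lemma Forall2_split s m (ps qs : list T) : Forall2 (itern (pd s) (S m)) ps qs ->
  exists rs, Forall2 (pd s) ps rs /\ Forall2 (itern (pd s) m) rs qs.
Proof.
  induction 1.
  - exists []; split; constructor.
  - destruct H as (z & h1 & h2). destruct IHForall2 as (rs & h3 & h4).
    exists (z :: rs); split; constructor; auto.
Qed.

Lemma lift_pd_op s o m (ps qs : list T) : Forall2 (itern (pd s) m) ps qs ->
  clos_refl_trans _ (pd s) (Op o ps) (Op o qs).
Proof.
  revert ps; induction m; intros ps H.
  - assert (ps = qs) by (induction H; simpl in *; subst; auto). subst; apply rt_refl.
  - destruct (Forall2_split H) as (rs & h1 & h2).
    destruct (classic (normal s (Op o ps))) as [Hn|Hn].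
    + assert (rs = ps). { apply normal_op in Hn. clear h2 H. revert Hn. induction h1; intros Hn; inversion Hn; subst; auto.
        f_equal; [eapply pd_normal_id; eauto | auto]. }
      subst; auto.
    + eapply rt_trans; [apply rt_step; apply pd_op; eauto; apply snormal_op|]. auto.
Qed.


Lemma ustep_snormal_inv s (M M' : T) : snormal s M -> ustep s M M' ->
  (exists P P', M = Lam P /\ M' = Lam P' /\ ustep s P P') \/
  (exists P P' Q, M = App P Q /\ M' = App P' Q /\ ustep s P P') \/
  (exists P Q Q', M = App P Q /\ M' = App P Q' /\ ustep s Q Q') \/
  (exists o l1 P P' l2, M = Op o (l1 ++ P :: l2) /\ M' = Op o (l1 ++ P' :: l2) /\ ustep s P P').
Proof.
  intros Hs H; destruct H.
  - exfalso; eapply Hs; eauto.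
  - left; eauto 7.
  - right; left; eauto 7.
  - right; right; left; eauto 7.
  - right; right; right; eauto 10.
Qed.

Lemma decomp_lam s m (P N : T) : snormal s (Lam P) -> itern (ustep s) m (Lam P) N ->
  exists Q, N = Lam Q /\ itern (ustep s) m P Q.
Proof.
  revert P; induction m; simpl; intros P Hs H.
  - subst; eauto.
  - destruct H as (z & h1 & h2).
    destruct (ustep_snormal_inv Hs h1) as [(a & b & E1 & E2 & h)|[(a&b&c&E1&E2&h)|[(a&b&c&E1&E2&h)|(a&b&c&d&e&E1&E2&h)]]];
      try discriminate.
    injection E1; intros; subst.
    destruct (IHm b) as (Q & E & HQ); auto. exact (proj1 (ustep_snormal h1 Hs)). eauto.
Qed.

Lemma decomp_app s m (P Q N : T) : snormal s (App P Q) -> itern (ustep s) m (App P Q) N ->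
  exists P1 Q1 a b, N = App P1 Q1 /\ a <= m /\ b <= m /\ itern (ustep s) a P P1 /\ itern (ustep s) b Q Q1.
Proof.
  revert P Q; induction m; simpl; intros P Q Hs H.
  - subst. exists P, Q, 0, 0; repeat split; auto.
  - destruct H as (z & h1 & h2).
    pose proof (proj1 (ustep_snormal h1 Hs)) as Hs'.
    destruct (ustep_snormal_inv Hs h1) as [(a & b & E1 & E2 & h)|[(a&b&c&E1&E2&h)|[(a&b&c&E1&E2&h)|(a&b&c&d&e&E1&E2&h)]]];
      try discriminate; injection E1; intros; subst.
    + destruct (IHm _ _ Hs' h2) as (P1 & Q1 & x & y & E & l1 & l2 & i1 & i2).
      exists P1, Q1, (S x), y; repeat split; simpl; eauto; lia.
    + destruct (IHm _ _ Hs' h2) as (P1 & Q1 & x & y & E & l1 & l2 & i1 & i2).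
      exists P1, Q1, x, (S y); repeat split; simpl; eauto; lia.
Qed.

Lemma Forall2_mono {A B} (R R' : A -> B -> Prop) l l' : (forall x y, R x y -> R' x y) ->
  Forall2 R l l' -> Forall2 R' l l'.
Proof. intros H; induction 1; constructor; auto. Qed.

Lemma decomp_op s m o (ps : list T) N : itern (ustep s) m (Op o ps) N ->
  exists qs, N = Op o qs /\ Forall2 (fun p q => exists a, a <= m /\ itern (ustep s) a p q) ps qs.
Proof.
  revert ps; induction m; simpl; intros ps H.
  - subst. exists ps; split; auto. induction ps; constructor; auto. exists 0; simpl; auto.
  - destruct H as (z & h1 & h2).
    destruct (ustep_snormal_inv (snormal_op (s:=s) (o:=o) (l:=ps)) h1) as [(a & b & E1 & E2 & h)|[(a&b&c&E1&E2&h)|[(a&b&c&E1&E2&h)|(a&b&c&d&e&E1&E2&h)]]];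
      try discriminate; injection E1; intros; subst.
    destruct (IHm _ h2) as (qs & E & F). exists qs; split; auto.
    apply Forall2_app_inv_l in F. destruct F as (q1 & q2 & F1 & F2 & E3). subst qs.
    inversion F2; subst. apply Forall2_app.
    + eapply Forall2_mono; [|exact F1]. intros x0 y0 (k & hk & hk'); exists k; split; auto.
    + constructor.
      * match goal with H : exists _, _ |- _ => destruct H as (k & hk & hk') end.
        exists (S k); split; [lia|]. simpl; eauto.
      * eapply Forall2_mono; [|eassumption]. intros x0 y0 (k & hk & hk'); exists k; split; auto.
Qed.

Definition G s (M N : T) := exists N', clos_refl_trans _ (pd s) M N' /\ clos_refl_trans _ (ustep s) N N'.

Lemma main_aux s n : (forall m, m < n -> forall M N, itern (ustep s) m M N -> G s M N) ->
  forall M m N, m <= n -> itern (ustep s) m M N -> G s M N.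
Proof.
  intros IHn M. induction M using term_ind'; intros m N Hm Hu;
  (match goal with |- G _ ?M _ => destruct (classic (snormal s M)) as [Hs|Hs] end;
   [| destruct m as [|m]; simpl in Hu;
      [subst; eexists; split; apply rt_refl
      | destruct Hu as (z & h1 & h2); destruct h1;
        try (exfalso; apply Hs; assumption);
        destruct (IHn m ltac:(lia) _ _ h2) as (N' & g1 & g2);
        exists N'; split; auto; eapply rt_trans; [apply rt_step, pd_surf; eassumption | auto]]]).
  -
    destruct m as [|m]; simpl in Hu.
    + subst; eexists; split; apply rt_refl.
    + destruct Hu as (z & h1 & h2).
      destruct (ustep_snormal_inv Hs h1) as [(a & b & E1 & E2 & h)|[(a&b&c&E1&E2&h)|[(a&b&c&E1&E2&h)|(a&b&c&d&e&E1&E2&h)]]];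
      discriminate.
  - destruct (decomp_lam Hs Hu) as (Q & E & HQ). subst.
    destruct (IHM m Q Hm HQ) as (Q' & g1 & g2).
    exists (Lam Q'); split.
    + apply lift_pd_lam; auto.
    + apply lam_lift; auto. eapply ustep_rt_snormal; [|exact Hs]. apply lam_lift; auto. eapply itern_rt; eauto.
  - destruct (decomp_app Hs Hu) as (P1 & Q1 & a & b & E & ha & hb & i1 & i2). subst.
    destruct (IHM1 a P1 ltac:(lia) i1) as (P' & g1 & g2).
    destruct (IHM2 b Q1 ltac:(lia) i2) as (Q' & g3 & g4).
    destruct (rt_itern g1) as [k1 k1'], (rt_itern g3) as [k2 k2'].
    destruct (pad k1' (Nat.le_max_l k1 k2)) as (P'' & p1 & p2).
    destruct (pad k2' (Nat.le_max_r k1 k2)) as (Q'' & p3 & p4).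
    exists (App P'' Q''); split.
    + eapply lift_pd_app; eauto.
    + apply app_lift.
      * eapply ustep_rt_snormal; [|exact Hs]. eapply itern_rt; eauto.
      * eapply rt_trans; eauto.
      * eapply rt_trans; eauto.
  - destruct (decomp_op Hu) as (qs & E & F). subst.
    assert (exists qs', Forall2 (fun p q => exists k, itern (pd s) k p q) l qs' /\
                        Forall2 (clos_refl_trans _ (ustep s)) qs qs') as (qs' & F1 & F2).
    { clear Hs. revert H F. clear Hu. revert qs. induction l; intros qs H0 F; inversion F; subst.
      - exists []; split; constructor.
      - inversion H0; subst.
        match goal with H : exists _, _ |- _ => destruct H as (k & hk & hk') end.
        match goal with H : forall m N, _ |- _ => destruct (H k _ ltac:(lia) hk') as (y' & g1 & g2) end.
        destruct (rt_itern g1) as [j hj].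
        destruct (IHl l' ltac:(assumption) ltac:(assumption)) as (qs' & f1 & f2).
        exists (y' :: qs'); split; constructor; eauto. }
    destruct (pad_all F1) as (mm & ps'' & F3 & F4).
    exists (Op o ps''); split.
    + eapply lift_pd_op; eauto.
    + change (Op o qs) with (Op o ([] ++ qs)). change (Op o ps'') with (Op o ([] ++ ps'')).
      apply op_lift. eapply Forall2_rt_trans; eauto.
Qed.

Lemma main3 s (M N : T) : clos_refl_trans _ (ustep s) M N -> G s M N.
Proof.
  intros H. destruct (rt_itern H) as [n Hn].
  assert (forall n, forall m, m < n -> forall M N, itern (ustep s) m M N -> G s M N).
  { induction n0; intros m Hm; [lia|]. intros M0 N0 Hu. eapply (main_aux IHn0); [|exact Hu]. lia. }
  eapply (H0 (S n)); eauto.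
Qed.

End S.

Theorem mainTheorem14 (O : Type) (ar : O -> nat) (s : calculus) :
  (forall M N : term O, wf ar M -> pd s M N -> clos_refl_trans _ (ustep s) M N) /\
  (forall M N : term O, wf ar M ->
      clos_refl_trans _ (pd s) M N -> clos_refl_trans _ (ustep s) M N) /\
  (forall M N : term O, wf ar M -> clos_refl_trans _ (ustep s) M N ->
      exists N', clos_refl_trans _ (pd s) M N' /\ clos_refl_trans _ (ustep s) N N').
Proof.
  split; [|split].
  - intros M N _ H; apply part1; auto.
  - intros M N _ H. induction H.
    + apply part1; auto.
    + apply rt_refl.
    + eapply rt_trans; eauto.
  - intros M N _ H. exact (main3 H).
Qed.
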